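(* Let $\vec{B}_1,\dots,\vec{B}_d$ ($d\in\mathbb{N}$) be mutually coorthogonal blades in $\mathcal{G}^{p,q}$ with $\vec{B}_k^2\in\mathbb{R}\setminus\{0\}$ (so $\vec B_k^{-1}=\vec B_k\vec B_k^{-2}$), let $\vec{A}\in\mathcal{G}^{p,q}$ and $\vec{j}=(j_1,\dots,j_d)\in\{0,1\}^d$. Then for every permutation $\sigma$ of $\{1,\dots,d\}$, $$\vec{A}_{\vec c^{(j_{\sigma(1)},\dots,j_{\sigma(d)})}(\overrightarrow{\vec B_{\sigma(1)},\dots,\vec B_{\sigma(d)}})}=\vec{A}_{\vec c^{\vec j}(\overrightarrow{\vec B_1,\dots,\vec B_d})}\quad\text{and}\quad \vec{A}_{\vec c^{(j_{\sigma(1)},\dots,j_{\sigma(d)})}(\overleftarrow{\vec B_{\sigma(1)},\dots,\vec B_{\sigma(d)}})}=\vec{A}_{\vec c^{\vec j}(\overleftarrow{\vec B_1,\dots,\vec B_d})},$$ i.e. these expressions do not depend on the order of the blades.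
   Context: $\mathcal{G}^{p,q}$ is the real geometric algebra of $\mathbb{R}^{p,q}$. Blades $\vec A,\vec B$ are coorthogonal if $\vec A\vec B=\pm\vec B\vec A$. For an invertible $\vec B$ and any $\vec A$: $\vec{A}_{\vec c^0(\vec{B})}=\frac12(\vec{A}+\vec{B}^{-1}\vec{A}\vec{B})$, $\vec{A}_{\vec c^1(\vec{B})}=\frac12(\vec{A}-\vec{B}^{-1}\vec{A}\vec{B})$. For an ordered tuple $(\vec B_1,\dots,\vec B_d)$ of invertible elements and $\vec j\in\{0,1\}^d$: $\vec{A}_{\vec c^{\vec{j}}(\overrightarrow{\vec B_1,\dots,\vec B_d})}=((\vec{A}_{\vec c^{j_1}(\vec{B}_1)})_{\vec c^{j_2}(\vec{B}_2)}\cdots)_{\vec c^{j_d}(\vec{B}_d)}$ and $\vec{A}_{\vec c^{\vec{j}}(\overleftarrow{\vec B_1,\dots,\vec B_d})}=((\vec{A}_{\vec c^{j_d}(\vec{B}_d)})_{\vec c^{j_{d-1}}(\vec{B}_{d-1})}\cdots)_{\vec c^{j_1}(\vec{B}_1)}$. *)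

(* Defs.v *)
From HB Require Import structures.
From mathcomp Require Import all_boot all_order all_algebra.
From mathcomp Require Import reals.
Set Implicit Arguments. Unset Strict Implicit. Unset Printing Implicit Defensive.
Import Order.TTheory GRing.Theory Num.Theory.
Local Open Scope ring_scope.

Section GA.
Variables (R : realType) (p q : nat).

(* Basis blades e_S indexed by subsets S of {0,...,p+q-1};
   e_i^2 = +1 for i < p and -1 for p <= i < p+q. *)
Definition idx := 'I_(p + q).
Definition mv := {ffun {set idx} -> R}.

Definition sqsig (i : idx) : R := if (i < p)%N then 1 else -1.

Definition reorder_sign (A B : {set idx}) : R :=
  (-1) ^+ #|[set x : idx * idx | [&& x.1 \in A, x.2 \in B & (x.2 < x.1)%N]]|.

Definition symdiff (A B : {set idx}) : {set idx} := (A :\: B) :|: (B :\: A).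

Definition basis (S : {set idx}) : mv := [ffun T => (T == S)%:R].

Definition gmul (X Y : mv) : mv :=
  [ffun S => \sum_(A : {set idx}) \sum_(B : {set idx})
     if symdiff A B == S then
       X A * Y B * (reorder_sign A B * \prod_(i in A :&: B) sqsig i)
     else 0].

Definition wedge (X Y : mv) : mv :=
  [ffun S => \sum_(A : {set idx}) \sum_(B : {set idx})
     if (A :|: B == S) && (A :&: B == set0) then X A * Y B * reorder_sign A B
     else 0].

Definition one_mv : mv := basis set0.
Definition scal (c : R) : mv := [ffun S => c * one_mv S].

Definition is_vector (v : mv) : Prop := forall S : {set idx}, #|S| != 1%N -> v S = 0.

Definition blade (X : mv) : Prop :=
  exists (c : R) (vs : seq mv),
    (forall v, v \in vs -> is_vector v) /\ X = [ffun S => c * foldr wedge one_mv vs S].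

Definition sq_nonzero_scalar (X : mv) : Prop :=
  exists c : R, c != 0 /\ gmul X X = scal c.

(* inverse of an element whose square is a nonzero scalar: B^{-1} = B B^{-2} *)
Definition sinv (X : mv) : mv := [ffun S => ((gmul X X) set0)^-1 * X S].

Definition coorthogonal (X Y : mv) : Prop :=
  gmul X Y = gmul Y X \/ gmul X Y = [ffun S => - gmul Y X S].

Definition cproj (j : bool) (B A : mv) : mv :=
  let C := gmul (gmul (sinv B) A) B in
  if j then [ffun S => (2%:R)^-1 * (A S - C S)]
       else [ffun S => (2%:R)^-1 * (A S + C S)].

(* forward: apply (B_1,j_1) first, ..., (B_d,j_d) last *)
Definition cproj_fwd (Bs : seq (mv * bool)) (A : mv) : mv :=
  foldl (fun X bj => cproj bj.2 bj.1 X) A Bs.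

(* backward: apply (B_d,j_d) first, ..., (B_1,j_1) last *)
Definition cproj_bwd (Bs : seq (mv * bool)) (A : mv) : mv :=
  foldr (fun bj X => cproj bj.2 bj.1 X) A Bs.

End GA.

(* Main.v *)
Require Import Defs.
From HB Require Import structures.
From mathcomp Require Import all_boot all_order all_fingroup all_algebra.
From mathcomp Require Import reals ring.
Import Order.TTheory GRing.Theory Num.Theory.
Local Open Scope ring_scope.

Section Fold.
Variables (I : eqType) (T : Type) (f : I -> T -> T).
Hypothesis hc : forall i k x, f i (f k x) = f k (f i x).

Lemma foldr_mid x i s t : foldr f x (s ++ i :: t) = f i (foldr f x (s ++ t)).
Proof. by elim: s => [|a s IH] //=; rewrite IH hc. Qed.

Lemma foldr_perm x s1 s2 : perm_eq s1 s2 -> foldr f x s1 = foldr f x s2.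
Proof.
elim: s1 s2 => [|i s1 IH] s2.
  by rewrite perm_sym => /perm_nilP ->.
move=> hp; have hi : i \in s2 by rewrite -(perm_mem hp) mem_head.
move: hp; case/splitPr: hi => a b hp.
have hp2 : perm_eq (a ++ i :: b) (i :: a ++ b).
  by rewrite -cat1s perm_catCA.
have := perm_trans hp hp2; rewrite perm_cons /= => /IH ->.
by rewrite foldr_mid.
Qed.

Lemma foldl_perm x s1 s2 : perm_eq s1 s2 ->
  foldl (fun z i => f i z) x s1 = foldl (fun z i => f i z) x s2.
Proof.
move=> hp; rewrite -(revK s1) -(revK s2) !foldl_rev; apply: foldr_perm.
by rewrite perm_rev perm_sym perm_rev perm_sym.
Qed.
End Fold.

Lemma foldl_map' (T U V : Type) (g : V -> U -> V) (h : T -> U) z s :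
  foldl g z (map h s) = foldl (fun z x => g z (h x)) z s.
Proof. by elim: s z => //= a s IH z; rewrite IH. Qed.
Section Alg.
Variables (R : realType) (p q : nat).
Local Notation mv := (mv R p q).
Local Notation sset := {set idx p q}.

Definition sg (A B : sset) : R :=
  reorder_sign R A B * \prod_(i in A :&: B) sqsig R i.

Lemma gmulE (X Y : mv) S : gmul X Y S =
  \sum_(A : sset) \sum_(B : sset) (if symdiff A B == S then X A * Y B * sg A B else 0).
Proof. by rewrite ffunE. Qed.

Lemma sum_if_eq (x : sset) (F : sset -> R) :
  \sum_(D : sset) (if x == D then F D else 0) = F x.
Proof.
rewrite (bigD1 x) //= eqxx big1 ?addr0 // => D /negbTE.
by rewrite eq_sym => ->.
Qed.

Lemma symdiffA (A B C : sset) : symdiff (symdiff A B) C = symdiff A (symdiff B C).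
Proof.
apply/setP => i; rewrite !inE.
by case: (i \in A); case: (i \in B); case: (i \in C).
Qed.

Lemma rsP (A B : sset) : reorder_sign R A B =
  \prod_(x : idx p q * idx p q)
     (if [&& x.1 \in A, x.2 \in B & (x.2 < x.1)%N] then -1 else 1).
Proof.
rewrite /reorder_sign -prodr_const big_mkcond; apply: eq_bigr => x _.
by rewrite inE.
Qed.

Lemma rs_l (A B C : sset) :
  reorder_sign R (symdiff A B) C = reorder_sign R A C * reorder_sign R B C.
Proof.
rewrite !rsP -big_split; apply: eq_bigr => x _ /=; rewrite !inE.
case: (x.1 \in A); case: (x.1 \in B); case: (x.2 \in C); case: (x.2 < x.1)%N;
  by rewrite /= ?mulrNN ?mulr1 ?mul1r.
Qed.

Lemma rs_r (A B C : sset) :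
  reorder_sign R A (symdiff B C) = reorder_sign R A B * reorder_sign R A C.
Proof.
rewrite !rsP -big_split; apply: eq_bigr => x _ /=; rewrite !inE.
case: (x.1 \in A); case: (x.2 \in B); case: (x.2 \in C); case: (x.2 < x.1)%N;
  by rewrite /= ?mulrNN ?mulr1 ?mul1r.
Qed.

Lemma wP (A : sset) : \prod_(i in A) sqsig R i =
  \prod_(i : idx p q) (if i \in A then sqsig R i else 1).
Proof. by rewrite big_mkcond. Qed.

Lemma w_cocycle (A B C : sset) :
  \prod_(i in A :&: B) sqsig R i * \prod_(i in symdiff A B :&: C) sqsig R i =
  \prod_(i in B :&: C) sqsig R i * \prod_(i in A :&: symdiff B C) sqsig R i.
Proof.
rewrite !wP -!big_split; apply: eq_bigr => i _ /=; rewrite !inE.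
by case: (i \in A); case: (i \in B); case: (i \in C); rewrite /= ?mulr1 ?mul1r.
Qed.

Lemma sg_cocycle (A B C : sset) :
  sg A B * sg (symdiff A B) C = sg B C * sg A (symdiff B C).
Proof.
rewrite /sg rs_l rs_r.
have := w_cocycle A B C.
set w1 := \prod_(i in A :&: B) _; set w2 := \prod_(i in _ :&: C) _.
set w3 := \prod_(i in B :&: C) _; set w4 := \prod_(i in A :&: _) _ => hw.
transitivity (reorder_sign R A B * reorder_sign R A C * reorder_sign R B C * (w1 * w2)).
  by ring.
rewrite hw; ring.
Qed.

Lemma expand_l (X Y Z : mv) S : gmul (gmul X Y) Z S =
  \sum_(A : sset) \sum_(B : sset) \sum_(C : sset)
   (if symdiff (symdiff A B) C == S then X A * Y B * Z C * (sg A B * sg (symdiff A B) C) else 0).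
Proof.
rewrite gmulE.
transitivity (\sum_(D : sset) \sum_(C : sset) \sum_(A : sset) \sum_(B : sset)
  (if symdiff A B == D then
     (if symdiff D C == S then X A * Y B * Z C * (sg A B * sg D C) else 0) else 0)).
  apply: eq_bigr => D _; apply: eq_bigr => C _; rewrite gmulE.
  case: ifP => hS.
    rewrite -mulrA big_distrl; apply: eq_bigr => A _ /=.
    rewrite big_distrl; apply: eq_bigr => B _ /=.
    by case: ifP => _; [ring | rewrite mul0r].
  by rewrite big1 // => A _; rewrite big1 // => B _; case: ifP.
transitivity (\sum_(D : sset) \sum_(A : sset) \sum_(B : sset) \sum_(C : sset)
  (if symdiff A B == D then
     (if symdiff D C == S then X A * Y B * Z C * (sg A B * sg D C) else 0) else 0)).
  apply: eq_bigr => D _; rewrite exchange_big; apply: eq_bigr => A _.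
  exact: exchange_big.
rewrite exchange_big; apply: eq_bigr => A _; rewrite exchange_big.
apply: eq_bigr => B _; rewrite exchange_big; apply: eq_bigr => C _.
by rewrite (sum_if_eq (symdiff A B)
  (fun D => if symdiff D C == S then X A * Y B * Z C * (sg A B * sg D C) else 0)).
Qed.

Lemma expand_r (X Y Z : mv) S : gmul X (gmul Y Z) S =
  \sum_(A : sset) \sum_(B : sset) \sum_(C : sset)
   (if symdiff A (symdiff B C) == S then X A * Y B * Z C * (sg B C * sg A (symdiff B C)) else 0).
Proof.
rewrite gmulE.
transitivity (\sum_(A : sset) \sum_(E : sset) \sum_(B : sset) \sum_(C : sset)
  (if symdiff B C == E then
     (if symdiff A E == S then X A * Y B * Z C * (sg B C * sg A E) else 0) else 0)).
  apply: eq_bigr => A _; apply: eq_bigr => E _; rewrite gmulE.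
  case: ifP => hS.
    rewrite big_distrr big_distrl; apply: eq_bigr => B _ /=.
    rewrite big_distrr big_distrl; apply: eq_bigr => C _ /=.
    by case: ifP => _; [ring | rewrite mulr0 mul0r].
  by rewrite big1 // => B _; rewrite big1 // => C _; case: ifP.
apply: eq_bigr => A _; rewrite exchange_big; apply: eq_bigr => B _.
rewrite exchange_big; apply: eq_bigr => C _.
by rewrite (sum_if_eq (symdiff B C)
  (fun E => if symdiff A E == S then X A * Y B * Z C * (sg B C * sg A E) else 0)).
Qed.

Lemma gmulA (X Y Z : mv) : gmul (gmul X Y) Z = gmul X (gmul Y Z).
Proof.
apply/ffunP => S; rewrite expand_l expand_r.
apply: eq_bigr => A _; apply: eq_bigr => B _; apply: eq_bigr => C _.
by rewrite symdiffA sg_cocycle.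
Qed.

Definition sc (k : R) (X : mv) : mv := [ffun S => k * X S].

Lemma gmulZl k (X Y : mv) : gmul (sc k X) Y = sc k (gmul X Y).
Proof.
apply/ffunP => S; rewrite !ffunE big_distrr; apply: eq_bigr => A _ /=.
rewrite big_distrr; apply: eq_bigr => B _ /=; rewrite ffunE.
by case: ifP => _; [ring | rewrite mulr0].
Qed.

Lemma gmulZr k (X Y : mv) : gmul X (sc k Y) = sc k (gmul X Y).
Proof.
apply/ffunP => S; rewrite !ffunE big_distrr; apply: eq_bigr => A _ /=.
rewrite big_distrr; apply: eq_bigr => B _ /=; rewrite ffunE.
by case: ifP => _; [ring | rewrite mulr0].
Qed.

Lemma gmul_lin_l a b (X Y Z : mv) :
  gmul [ffun S => a * X S + b * Y S] Z = [ffun S => a * gmul X Z S + b * gmul Y Z S].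
Proof.
apply/ffunP => S; rewrite !ffunE !big_distrr -big_split; apply: eq_bigr => A _ /=.
rewrite !big_distrr -big_split; apply: eq_bigr => B _ /=; rewrite ffunE.
by case: ifP => _; [ring | rewrite !mulr0 addr0].
Qed.

Lemma gmul_lin_r a b (X Y Z : mv) :
  gmul Z [ffun S => a * X S + b * Y S] = [ffun S => a * gmul Z X S + b * gmul Z Y S].
Proof.
apply/ffunP => S; rewrite !ffunE !big_distrr -big_split; apply: eq_bigr => A _ /=.
rewrite !big_distrr -big_split; apply: eq_bigr => B _ /=; rewrite ffunE.
by case: ifP => _; [ring | rewrite !mulr0 addr0].
Qed.

Definition cB (B X : mv) : mv := gmul (gmul (sinv B) X) B.

Lemma cBE (B X : mv) : cB B X = sc (gmul B B set0)^-1 (gmul (gmul B X) B).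
Proof. by rewrite /cB -gmulZl -gmulZl. Qed.

Lemma cproj_eq j (B X : mv) :
  cproj j B X = [ffun S => 2%:R^-1 * X S + (if j then - 2%:R^-1 else 2%:R^-1) * cB B X S].
Proof. by apply/ffunP => S; rewrite /cproj; case: j; rewrite !ffunE; ring. Qed.

Lemma cB_lin a b (B X Y : mv) :
  cB B [ffun S => a * X S + b * Y S] = [ffun S => a * cB B X S + b * cB B Y S].
Proof. by rewrite /cB gmul_lin_r gmul_lin_l. Qed.

Lemma sc_sc a b (X : mv) : sc a (sc b X) = sc (a * b) X.
Proof. by apply/ffunP => S; rewrite !ffunE mulrA. Qed.

Lemma reassoc (U V X : mv) :
  gmul (gmul U (gmul (gmul V X) V)) U = gmul (gmul (gmul U V) X) (gmul V U).
Proof.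
transitivity (gmul (gmul (gmul (gmul U V) X) V) U); last by rewrite gmulA.
congr (gmul _ U); by rewrite -gmulA -gmulA.
Qed.

Lemma negneg (U V X : mv) :
  gmul (gmul [ffun S => -1 * U S] X) [ffun S => -1 * V S] = gmul (gmul U X) V.
Proof.
have -> : [ffun S => -1 * U S] = sc (-1) U by [].
have -> : [ffun S => -1 * V S] = sc (-1) V by [].
rewrite gmulZl gmulZl gmulZr sc_sc mulrNN mulr1.
by apply/ffunP => S; rewrite ffunE mul1r.
Qed.

Lemma cB_comm (B C X : mv) : coorthogonal B C -> cB B (cB C X) = cB C (cB B X).
Proof.
move=> hco.
rewrite !cBE !gmulZr !gmulZl !sc_sc !reassoc [X in sc X _]mulrC.
congr (sc _ _).
case: hco => h; first by rewrite h.
have e1 : gmul B C = [ffun S => -1 * gmul C B S].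
  by rewrite h; apply/ffunP => S; rewrite !ffunE mulN1r.
have e2 : gmul C B = [ffun S => -1 * gmul B C S].
  by rewrite e1; apply/ffunP => S; rewrite !ffunE mulN1r mulN1r opprK.
set u := gmul B C in e1 e2 *; set v := gmul C B in e1 e2 *.
transitivity (gmul (gmul [ffun S => -1 * v S] X) [ffun S => -1 * u S]).
  by rewrite -e1 -e2.
exact: negneg.
Qed.

Lemma cproj_comm j k (B C X : mv) : coorthogonal B C ->
  cproj j B (cproj k C X) = cproj k C (cproj j B X).
Proof.
move=> hco.
rewrite !cproj_eq !cB_lin (cB_comm B C X hco).
by apply/ffunP => S; rewrite !ffunE; ring.
Qed.
End Alg.

Theorem lemma3p4 (R : realType) (p q d : nat) (B : 'I_d -> mv R p q)
    (hblade : forall k, blade (B k))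
    (hsq : forall k, sq_nonzero_scalar (B k))
    (hco : forall k l, k != l -> coorthogonal (B k) (B l))
    (A : mv R p q) (j : 'I_d -> bool) (sigma : 'S_d) :
  cproj_fwd [seq (B (sigma i), j (sigma i)) | i <- enum 'I_d] A
    = cproj_fwd [seq (B i, j i) | i <- enum 'I_d] A
  /\
  cproj_bwd [seq (B (sigma i), j (sigma i)) | i <- enum 'I_d] A
    = cproj_bwd [seq (B i, j i) | i <- enum 'I_d] A.
Proof.
pose act := fun (i : 'I_d) (X : mv R p q) => cproj (j i) (B i) X.
have hc : forall i k x, act i (act k x) = act k (act i x).
  move=> i k x; rewrite /act; case: (eqVneq i k) => [-> // | hik].
  by apply: cproj_comm; apply: hco.
have hu := enum_uniq 'I_d.
have hm : forall i, i \in enum 'I_d by move=> i; rewrite mem_enum.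
move: (enum 'I_d) hu hm => s hu hm.
have hp : perm_eq (map sigma s) s.
  apply: uniq_perm => //.
  - by rewrite map_inj_uniq //; exact: perm_inj.
  move=> i; rewrite hm; apply/mapP; exists (sigma^-1 i)%g;
    by rewrite ?hm ?permKV.
split.
  rewrite /cproj_fwd !foldl_map'.
  transitivity (foldl (fun z i => act i z) A (map sigma s)).
    by rewrite foldl_map'; reflexivity.
  exact: (foldl_perm _ _ _ hc _ _ _ hp).
rewrite /cproj_bwd !foldr_map.
transitivity (foldr act A (map sigma s)).
  by rewrite foldr_map; reflexivity.
exact: (foldr_perm _ _ _ hc _ _ _ hp).
Qed.
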